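(* Let $R$ be a commutative ring with identity in which the map $r \mapsto 2r$ is injective. Let $L_x, L_y \geq 1$, and let $f, g \in R[x,y]$ both have length $L_x$ in $x$ and length $L_y$ in $y$; write $h = fg$. Put $N = \lceil L_x/2 \rceil$. The polynomials $f(x,\pm x^N)$, $x^{N(L_y-1)}f(x,\pm x^{-N})$ and the analogous ones for $g$ lie in $R[x]$ and have length $N(L_y-1)+L_x$. Using the four products $h(x,\pm x^N) = f(x,\pm x^N)g(x,\pm x^N)$ and $x^{2N(L_y-1)}h(x,\pm x^{-N}) = x^{N(L_y-1)}f(x,\pm x^{-N})\cdot x^{N(L_y-1)}g(x,\pm x^{-N})$, the problem of computing $h = fg$ (the `four-point' Kronecker substitution) reduces to four multiplications of polynomials of length $\lceil L_x/2\rceil(L_y-1) + L_x$ in $R[x]$, plus $O(L_xL_y)$ additions/subtractions in $R$ and $O(L_xL_y)$ divisions by $2$ in $R$ (covering both forming the evaluations and recovering all coefficients of $h$).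
   Context: A polynomial $p \in R[x]$ is regarded as a vector of coefficients of a known length $\ell$ (the coefficient of $x^{\ell-1}$ may be zero). A bivariate $p \in R[x,y]$ is a rectangular array of coefficients with a length $\ell_x$ in $x$ and a length $\ell_y$ in $y$, written $p = \sum_{i=0}^{\ell_y-1} p_i(x) y^i$ with each $p_i \in R[x]$ of length $\ell_x$. The product $h = fg$ has length $2L_x - 1$ in $x$ and $2L_y-1$ in $y$. Division by $2$ means computing the unique $s$ with $2s = r$ for an element $r \in 2R$. *)

(* Defs.v *)
From mathcomp Require Import all_boot all_order all_algebra.
Set Implicit Arguments. Unset Strict Implicit. Unset Printing Implicit Defensive.
Import GRing.Theory.
Local Open Scope ring_scope.

(* Bivariate polynomials: f : {poly {poly R}} = sum_j f`_j(x) y^j.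
   "length L_x in x, L_y in y" = size f <= L_y and size f`_j <= L_x for all j. *)

(* x^{N(L-1)} f(x, s * x^{-N}) with s = (-1)^+b, for f of y-length L. *)
Definition revsubst (R : comNzRingType) (N L : nat) (b : bool)
  (f : {poly {poly R}}) : {poly R} :=
  \sum_(j < L) f`_j * (((-1) ^+ b) ^+ j *: 'X^(N * (L - 1 - j))).

(* Straight-line programs over a commutative ring R, whose only        *)
(* operations are: addition, subtraction, exact halving, and calls to  *)
(* a black-box multiplier of two univariate polynomials (given by their *)
(* coefficient lists, each required to have length M) returning all   *)
(* coefficients of the product.                                        *)
(* Registers: a growing list; each instruction appends its result(s).  *)
(* Reading a nonexistent register yields 0.                            *)
Inductive instr :=
| IAdd of nat & nat
| ISub of nat & nat
| IHalf of nat
| IMul of seq nat & seq nat.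

Definition prog := seq instr.

Definition conv (R : comNzRingType) (u w : seq R) : seq R :=
  mkseq (fun k => \sum_(a < size u) \sum_(b < size w | (a + b == k)%N)
                     u`_a * w`_b) (size u + size w).-1.

(* hv is the halving function; it is required below to satisfy
   hv (r *+ 2) = r, i.e. it computes the unique s with 2s = r on 2R. *)
Definition step (R : comNzRingType) (hv : R -> R) (regs : seq R) (i : instr)
  : seq R :=
  match i with
  | IAdd a b => rcons regs (regs`_a + regs`_b)
  | ISub a b => rcons regs (regs`_a - regs`_b)
  | IHalf a => rcons regs (hv regs`_a)
  | IMul xs ys => regs ++ conv (map (nth 0 regs) xs) (map (nth 0 regs) ys)
  end.

Definition exec (R : comNzRingType) (hv : R -> R) (P : prog) (input : seq R)
  : seq R := foldl (step hv) input P.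

Definition run (R : comNzRingType) (hv : R -> R) (P : prog) (input : seq R)
  (out : seq nat) : seq R := map (nth 0 (exec hv P input)) out.

Definition mul_ok (M : nat) (P : prog) : bool :=
  all (fun i => if i is IMul xs ys then (size xs == M) && (size ys == M)
                else true) P.

Definition n_mul (P : prog) : nat :=
  count (fun i => if i is IMul _ _ then true else false) P.
Definition n_addsub (P : prog) : nat :=
  count (fun i => match i with IAdd _ _ | ISub _ _ => true | _ => false end) P.
Definition n_half (P : prog) : nat :=
  count (fun i => if i is IHalf _ then true else false) P.

(* Coefficient list of a bivariate polynomial of x-length Lx and
   y-length Ly: entry j * Lx + i is the coefficient of x^i y^j. *)
Definition encode (R : comNzRingType) (Lx Ly : nat) (f : {poly {poly R}})
  : seq R :=
  [seq (f`_(k %/ Lx))`_(k %% Lx) | k <- iota 0 (Lx * Ly)].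

(* Main.v *)
Require Import Defs.
From mathcomp Require Import all_boot all_order all_algebra.
From mathcomp Require Import zify ring.
Import GRing.Theory.

Section Prog.
Variables Lx Ly : nat.

Definition pN := uphalf Lx.
Definition pM := (pN * (Ly - 1) + Lx)%N.
Definition pM2 := (2 * pM - 1)%N.
Definition pJ := (2 * Ly - 1)%N.
Definition LL := (Lx * Ly)%N.
Definition Z := (2 * LL)%N.
Definition base1 := (Z + 1)%N.
Definition base2 := (base1 + 8 * pM)%N.
Definition base3 := (base2 + 4 * pM2)%N.
Definition base4 := (base3 + 4 * pM2)%N.
Definition base5 := (base4 + 4 * pM2)%N.

Definition reg1 (w rv : bool) (k i : nat) : nat :=
  if (k < Ly) && (i < Lx) then (w * LL + (if rv then Ly - 1 - k else k) * Lx + i)%N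
  else Z.

Definition ins1 (p : nat) : instr :=
  let bb := p %/ pM in let q := p %% pM in
  let mm := bb./2 in let w := odd bb in let rv := (2 <= mm) in let sg := odd mm in
  let A := reg1 w rv (2 * (q %/ (2 * pN))) (q %% (2 * pN)) in
  let B := if (pN <= q) then reg1 w rv (2 * ((q - pN) %/ (2 * pN)) + 1) ((q - pN) %% (2 * pN))
           else Z in
  if sg then ISub A B else IAdd A B.

Definition mulins (mm : nat) : instr :=
  IMul (mkseq (fun q => base1 + (2 * mm) * pM + q) pM)
       (mkseq (fun q => base1 + (2 * mm + 1) * pM + q) pM).

Definition ins3 (p : nat) : instr :=
  let cc := p %/ pM2 in let k := p %% pM2 in
  let mp := (if 2 <= cc then 2 else 0) in
  let A := (base2 + mp * pM2 + k) in let B := (base2 + mp.+1 * pM2 + k) in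
  if odd cc then ISub A B else IAdd A B.

Definition ins4 (p : nat) : instr := IHalf (base3 + p).

Definition ins5 (m : nat) : instr :=
  let j := m %/ (4 * pN) in let t := m %% (4 * pN) in
  if t < 2 * pN then
    let dk := pN * j + t in
    ISub (if dk < pM2 then base4 + (odd j) * pM2 + dk else Z)
         (if 2 <= j then base5 + (j - 2) * (4 * pN) + (t + 2 * pN) else Z)
  else
    let dk := pN * (pJ - 1 - j) + t in
    ISub (if dk < pM2 then base4 + (2 + odd j) * pM2 + dk else Z)
         (if 2 <= j then base5 + (j - 2) * (4 * pN) + (t - 2 * pN) else Z).

Definition theprog : prog :=
  ISub 0 0 :: mkseq ins1 (8 * pM) ++ [:: mulins 0; mulins 1; mulins 2; mulins 3] ++
  mkseq ins3 (4 * pM2) ++ mkseq ins4 (4 * pM2) ++ mkseq ins5 (pJ * (4 * pN)).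

Definition theout : seq nat :=
  mkseq (fun k => base5 + (k %/ (2 * Lx - 1)) * (4 * pN) + k %% (2 * Lx - 1))
        ((2 * Lx - 1) * (2 * Ly - 1)).

Lemma count_mkseq_all (a : pred instr) (F : nat -> instr) n :
  (forall i, a (F i)) -> count a (mkseq F n) = n.
Proof.
move=> H; rewrite /mkseq count_map.
have -> : count (preim F a) (iota 0 n) = count predT (iota 0 n).
  by apply: eq_count => i; rewrite /= H.
by rewrite count_predT size_iota.
Qed.

Lemma count_mkseq_none (a : pred instr) (F : nat -> instr) n :
  (forall i, ~~ a (F i)) -> count a (mkseq F n) = 0.
Proof.
move=> H; rewrite /mkseq count_map; apply/eqP; rewrite -leqn0 leqNgt -has_count.
by apply/hasPn => i _; rewrite /= (negbTE (H i)).
Qed.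

Lemma n_mul_prog : n_mul theprog = 4.
Proof.
rewrite /n_mul /theprog /= !count_cat /= !count_cat !count_mkseq_none //=.
- by move=> i; rewrite /ins5; case: ifP.
- by move=> i; rewrite /ins3; case: ifP.
by move=> i; rewrite /ins1; case: ifP.
Qed.

Lemma n_addsub_prog : n_addsub theprog = (1 + 8 * pM + 4 * pM2 + pJ * (4 * pN))%N.
Proof.
rewrite /n_addsub /theprog /= !count_cat /= !count_cat (@count_mkseq_none _ ins4) //=.
rewrite !count_mkseq_all //=.
- lia.
- by move=> i; rewrite /ins5; case: ifP.
- by move=> i; rewrite /ins3; case: ifP.
by move=> i; rewrite /ins1; case: ifP.
Qed.

Lemma n_half_prog : n_half theprog = (4 * pM2)%N.
Proof.
rewrite /n_half /theprog /= !count_cat /= !count_cat (@count_mkseq_all _ ins4) //=.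
rewrite !count_mkseq_none //=.
- lia.
- by move=> i; rewrite /ins5; case: ifP.
- by move=> i; rewrite /ins3; case: ifP.
by move=> i; rewrite /ins1; case: ifP.
Qed.

Lemma all_mkseq (a : pred instr) (F : nat -> instr) n :
  (forall i, a (F i)) -> all a (mkseq F n).
Proof. by move=> H; rewrite /mkseq all_map; apply/allP => i _ /=. Qed.

Lemma mul_ok_prog : mul_ok pM theprog.
Proof.
rewrite /mul_ok /theprog /= all_cat; apply/andP; split.
  by apply: all_mkseq => i; rewrite /ins1; case: ifP.
rewrite /= !size_mkseq eqxx /= !all_cat; apply/and3P; split.
- by apply: all_mkseq => i; rewrite /ins3; case: ifP.
- by apply: all_mkseq.
by apply: all_mkseq => i; rewrite /ins5; case: ifP.
Qed.

End Prog.

Local Open Scope ring_scope.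

Section Exec.
Variable R : comNzRingType.
Variable hv : R -> R.

Definition ev1 (regs : seq R) (i : instr) : R :=
  match i with
  | IAdd a b => regs`_a + regs`_b
  | ISub a b => regs`_a - regs`_b
  | IHalf a => hv regs`_a
  | IMul _ _ => 0 end.

Definition refs_ok (i : instr) (n : nat) : bool :=
  match i with
  | IAdd a b | ISub a b => (a < n)%N && (b < n)%N
  | IHalf a => (a < n)%N
  | IMul _ _ => false end.

Lemma exec_cat P Q regs : exec hv (P ++ Q) regs = exec hv Q (exec hv P regs).
Proof. by rewrite /exec foldl_cat. Qed.

Lemma ev1_eq i m (s1 s2 : seq R) : refs_ok i m ->
  (forall a, (a < m)%N -> s1`_a = s2`_a) -> ev1 s1 i = ev1 s2 i.
Proof.
case: i => [a b|a b|a|xs ys] //= => [/andP[ha hb]|/andP[ha hb]|ha] E;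
  by rewrite ?E.
Qed.

Lemma step_ok regs i : refs_ok i (size regs) -> step hv regs i = rcons regs (ev1 regs i).
Proof. by case: i. Qed.

Lemma nth_prefix (T : Type) (x0 : T) (regs : seq T) (v : nat -> T) n a :
  (a < size regs + n)%N -> nth x0 (regs ++ mkseq v n.+1) a = nth x0 (regs ++ mkseq v n) a.
Proof.
move=> ha; rewrite !nth_cat; case: ltnP => // h.
rewrite !nth_mkseq //; lia.
Qed.

Lemma exec_block regs (ins : nat -> instr) (v : nat -> R) n :
  (forall k, (k < n)%N -> refs_ok (ins k) (size regs + k) /\
      ev1 (regs ++ mkseq v n) (ins k) = v k) ->
  exec hv (mkseq ins n) regs = regs ++ mkseq v n.
Proof.
elim: n => [|n IH] H; first by rewrite /= cats0.
rewrite mkseqS /exec foldl_rcons -/(exec hv _ _) IH; last first.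
  move=> k hk; have [h1 h2] := H k (ltnW hk); split => //.
  rewrite -h2; apply: (ev1_eq _ _ _ _ h1) => a ha; rewrite nth_prefix //; apply: (leq_trans ha); rewrite leq_add2l; exact: ltnW hk.
have [h1 h2] := H n (ltnSn n).
rewrite step_ok; last by rewrite size_cat size_mkseq.
rewrite mkseqS rcons_cat; congr (_ ++ rcons _ _).
rewrite -h2; apply: (ev1_eq _ _ _ _ h1) => a ha; rewrite nth_prefix //.
Qed.

Lemma map_nth_cat (s t : seq R) xs : all (fun x => (x < size s)%N) xs ->
  map (nth 0 (s ++ t)) xs = map (nth 0 s) xs.
Proof. move=> /allP H; apply/eq_in_map => x /H hx; by rewrite nth_cat hx. Qed.

Lemma step_mul regs t xs ys : all (fun x => (x < size regs)%N) (xs ++ ys) ->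
  step hv (regs ++ t) (IMul xs ys) =
  regs ++ t ++ conv (map (nth 0 regs) xs) (map (nth 0 regs) ys).
Proof.
rewrite all_cat => /andP[h1 h2] /=; by rewrite !map_nth_cat // catA.
Qed.

End Exec.

Lemma sum_ext0 (A : nmodType) (F : nat -> A) n m : (n <= m)%N ->
  (forall i, (n <= i)%N -> (i < m)%N -> F i = 0) ->
  \sum_(i < m) F i = \sum_(i < n) F i.
Proof.
move=> nm H; rewrite -!(big_mkord xpredT) (@big_cat_nat _ _ _ n 0 m) //=.
rewrite [X in _ + X = _](_ : _ = 0) ?addr0 //.
rewrite big_nat_cond big1 // => i /andP[/andP[h1 h2] _].
exact: H.
Qed.

Lemma sum_two (A : nmodType) J (F : nat -> A) a b : (a < J)%N -> (b < J)%N ->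
  a != b -> (forall j, (j < J)%N -> j != a -> j != b -> F j = 0) ->
  \sum_(j < J) F j = F a + F b.
Proof.
move=> ha hb ab H.
rewrite (bigD1 (Ordinal ha)) //= (bigD1 (Ordinal hb)) /=; last first.
  by apply/eqP => /(congr1 val) /= e; move: ab; rewrite e eqxx.
rewrite big1 ?addr0 // => i /andP[h1 h2]; apply: H => //.
Qed.

Lemma sum_one (A : nmodType) J (F : nat -> A) a : (a < J)%N ->
  (forall j, (j < J)%N -> j != a -> F j = 0) ->
  \sum_(j < J) F j = F a.
Proof.
move=> ha H; rewrite (bigD1 (Ordinal ha)) //= big1 ?addr0 // => i h1; apply: H => //.
Qed.

Section PolyLemmas.
Variable A : comNzRingType.

Lemma coefM2 (p q : {poly A}) L k : (size p <= L)%N -> (size q <= L)%N ->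
  (p * q)`_k = \sum_(a < L) \sum_(b < L) (if (a + b == k)%N then p`_a * q`_b else 0).
Proof.
move=> hp hq; rewrite coefM.
have inner : forall a : 'I_L, \sum_(b < L) (if (a + b == k)%N then p`_a * q`_b else 0)
   = if (a <= k)%N then p`_a * q`_(k - a) else 0.
  move=> a; case: (leqP a k) => hak.
    case: (ltnP (k - a) L) => hkL.
      rewrite (@sum_one _ L (fun b => if (a + b == k)%N then p`_a * q`_b else 0) (k - a)%N) //; first by rewrite subnKC // eqxx.
      by move=> j _ /eqP hj; case: eqP => // e; exfalso; apply: hj; lia.
    rewrite [q`_(k - a)]nth_default ?mulr0; last exact: leq_trans hq hkL.
    rewrite big1 // => b _; case: eqP => // e; exfalso.
    have := ltn_ord b; lia.
  by rewrite big1 // => b _; case: eqP => // e; exfalso; lia.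
rewrite (eq_bigr _ (fun a _ => inner a)).
rewrite -(@sum_ext0 _ (fun a => if (a <= k)%N then p`_a * q`_(k - a) else 0) L (L + k.+1)%N); last 2 first.
- exact: leq_addr.
- by move=> i hi _; rewrite nth_default ?mul0r ?if_same //; exact: leq_trans hp hi.
rewrite (@sum_ext0 _ (fun a => if (a <= k)%N then p`_a * q`_(k - a) else 0) k.+1); last 2 first.
- exact: leq_addl.
- by move=> i hi _; case: leqP => //; lia.
by apply: eq_bigr => i _; rewrite -ltnS ltn_ord.
Qed.

Lemma sum_mul (E1 E2 : nat -> A) (p q : {poly A}) L :
  (size p <= L)%N -> (size q <= L)%N ->
  (forall a b, (a < L)%N -> (b < L)%N -> E1 a * E1 b = E2 (a + b)%N) ->
  (\sum_(j < L) p`_j * E1 j) * (\sum_(j < L) q`_j * E1 j) =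
  \sum_(k < (2 * L - 1)%N) (p * q)`_k * E2 k.
Proof.
move=> hp hq HE.
apply/esym.
rewrite (eq_bigr (fun k : 'I_(2 * L - 1) => \sum_(a < L) \sum_(b < L)
   (if (a + b == k)%N then p`_a * q`_b else 0) * E2 k)); last first.
  move=> k _; rewrite (coefM2 _ _ _ _ hp hq) mulr_suml; apply: eq_bigr => a _.
  by rewrite mulr_suml.
rewrite exchange_big /=.
rewrite mulr_suml; apply: eq_bigr => a _.
rewrite exchange_big /= mulr_sumr; apply: eq_bigr => b _.
have hab : (a + b < 2 * L - 1)%N by have := ltn_ord a; have := ltn_ord b; lia.
rewrite (@sum_one _ _ (fun k => (if (a + b == k)%N then p`_a * q`_b else 0) * E2 k) (a + b)%N) //=; last first.
  by move=> j _ hj; rewrite eq_sym (negbTE hj) mul0r.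
rewrite eqxx mulrACA HE //.
Qed.

Lemma coef_sub (c : nat -> {poly A}) (w : nat -> A) (o : nat -> nat) J k :
  (\sum_(j < J) c j * (w j *: 'X^(o j)))`_k =
  \sum_(j < J) w j * (if (o j <= k)%N then (c j)`_(k - o j) else 0).
Proof.
rewrite coef_sum; apply: eq_bigr => j _.
rewrite -scalerAr coefZ coefMXn; case: ltnP => //= h.
Qed.

Lemma size_sub (c : nat -> {poly A}) (w : nat -> A) (o : nat -> nat) J B Lx :
  (forall j, (j < J)%N -> (o j <= B)%N) -> (forall j, (size (c j) <= Lx)%N) ->
  (size (\sum_(j < J) c j * (w j *: 'X^(o j)))%R <= B + Lx)%N.
Proof.
move=> ho hc.
apply: (big_ind (fun p : {poly A} => (size p <= B + Lx)%N)).
- by rewrite size_poly0.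
- move=> x y hx hy; apply: leq_trans (size_polyD _ _) _; by rewrite geq_max hx hy.
move=> j _; apply: leq_trans (size_polyMleq _ _) _.
have h1 := hc j; have h2 := ho j (ltn_ord j).
have h3 : (size (w j *: 'X^(o j)) <= (o j).+1)%N.
  by apply: leq_trans (size_scale_leq _ _) _; rewrite size_polyXn.
move: h1 h2 h3; set s1 := size (c j); set s2 := size _; lia.
Qed.

End PolyLemmas.

Lemma sgn_subn (A : comNzRingType) (b : bool) m n : (n <= m)%N ->
  ((-1) ^+ b : A) ^+ (m - n) = ((-1) ^+ b) ^+ m * ((-1) ^+ b) ^+ n.
Proof.
case: b => hnm; last by rewrite expr0 !expr1n mulr1.
by rewrite expr1 -(signr_odd _ (m - n)) oddB // signr_addb !signr_odd.
Qed.

Lemma sgn_sq (A : comNzRingType) (b : bool) m :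
  ((-1) ^+ b : A) ^+ m * ((-1) ^+ b) ^+ m = 1.
Proof. by case: b; rewrite ?expr0 ?expr1 -exprMn ?mulrNN mulr1 expr1n. Qed.

Section Math.
Variable R : comNzRingType.
Variables Lx Ly : nat.
Hypothesis hLx : (1 <= Lx)%N.
Hypothesis hLy : (1 <= Ly)%N.
Variables f g : {poly {poly R}}.
Hypothesis hf : (size f <= Ly)%N.
Hypothesis hfc : forall j, leq (size f`_j) Lx.
Hypothesis hg : (size g <= Ly)%N.
Hypothesis hgc : forall j, leq (size g`_j) Lx.

Let N := uphalf Lx.
Let J := (2 * Ly - 1)%N.

Lemma N_gt0 : (0 < N)%N. Proof. rewrite /N; lia. Qed.
Lemma Lx_le : (Lx <= 2 * N)%N. Proof. rewrite /N; lia. Qed.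

Definition phi (s : R) (c : nat -> {poly R}) (L : nat) : {poly R} :=
  \sum_(j < L) c j * (s ^+ j *: 'X^(N * j)).

Definition cr (c : nat -> {poly R}) (j : nat) : {poly R} :=
  if (j < Ly)%N then c (Ly - 1 - j)%N else 0.

Lemma hsize j : leq (size (f * g)`_j) (2 * Lx - 1).
Proof.
rewrite (coefM2 _ _ _ _ _ hf hg).
apply: (big_ind (fun p : {poly R} => (size p <= 2 * Lx - 1)%N)).
- by rewrite size_poly0.
- move=> x y hx hy; apply: leq_trans (size_polyD _ _) _; by rewrite geq_max hx hy.
move=> a _.
apply: (big_ind (fun p : {poly R} => (size p <= 2 * Lx - 1)%N)).
- by rewrite size_poly0.
- move=> x y hx hy; apply: leq_trans (size_polyD _ _) _; by rewrite geq_max hx hy.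
move=> b _; case: eqP => _; last by rewrite size_poly0.
apply: leq_trans (size_polyMleq _ _) _.
have := hfc a; have := hgc b; set u := size _; set v := size _; lia.
Qed.

Lemma hzero j t : (4 * N <= t)%N -> ((f * g)`_j)`_t = 0.
Proof.
move=> ht; apply: nth_default; apply: leq_trans (hsize j) _.
have := Lx_le; lia.
Qed.

Lemma mul_fwd (s : R) :
  phi s (fun j => f`_j) Ly * phi s (fun j => g`_j) Ly =
  \sum_(j < J) (f * g)`_j * (s ^+ j *: 'X^(N * j)).
Proof.
rewrite /phi (@sum_mul _ (fun j => s ^+ j *: 'X^(N * j)) (fun j => s ^+ j *: 'X^(N * j))) //.
move=> a b _ _; rewrite -scalerAl -scalerAr scalerA -exprD -exprD mulnDr.
by [].
Qed.

Lemma phi_cr (b : bool) (c : nat -> {poly R}) :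
  phi ((-1) ^+ b) (cr c) Ly = ((-1) ^+ b) ^+ (Ly - 1) *:
    \sum_(j < Ly) c j * (((-1) ^+ b) ^+ j *: 'X^(N * (Ly - 1 - j))).
Proof.
rewrite /phi (reindex_inj rev_ord_inj) /= scaler_sumr; apply: eq_bigr => j _.
have hj := ltn_ord j.
have e1 : (Ly - j.+1 = Ly - 1 - j)%N by lia.
have e2 : (Ly - 1 - (Ly - j.+1) = j)%N by lia.
rewrite /cr e2 e1 ifT; last by lia.
rewrite (@sgn_subn _ b (Ly - 1)%N j); last by lia.
by rewrite -scalerA !scalerAr.
Qed.

Lemma mul_rev (b : bool) :
  phi ((-1) ^+ b) (cr (fun j => f`_j)) Ly * phi ((-1) ^+ b) (cr (fun j => g`_j)) Ly =
  \sum_(j < J) (f * g)`_j * (((-1) ^+ b) ^+ j *: 'X^(N * (J - 1 - j))).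
Proof.
rewrite !phi_cr -scalerAl -scalerAr scalerA sgn_sq scale1r.
rewrite (@sum_mul _ (fun j => ((-1) ^+ b) ^+ j *: 'X^(N * (Ly - 1 - j)))
   (fun j => ((-1) ^+ b) ^+ j *: 'X^(N * (J - 1 - j)))) //.
move=> a c ha hc; rewrite -scalerAl -scalerAr scalerA -exprD -exprD -mulnDr.
by congr (_ *: 'X^(N * _)); rewrite /J; lia.
Qed.

Let h := f * g.
Definition o (rv : bool) (j : nat) : nat := if rv then (N * (J - 1 - j))%N else (N * j)%N.
Definition T (rv : bool) (j k : nat) : R :=
  if (o rv j <= k)%N then (h`_j)`_(k - o rv j) else 0.
Definition D (e rv : bool) (k : nat) : R :=
  \sum_(j < J) (if odd j == e then T rv j k else 0).

Lemma mul_o (rv b : bool) :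
  (if rv then phi ((-1) ^+ b) (cr (fun j => f`_j)) Ly * phi ((-1) ^+ b) (cr (fun j => g`_j)) Ly
   else phi ((-1) ^+ b) (fun j => f`_j) Ly * phi ((-1) ^+ b) (fun j => g`_j) Ly) =
  \sum_(j < J) h`_j * (((-1) ^+ b) ^+ j *: 'X^(o rv j)).
Proof. by case: rv; rewrite ?mul_rev ?mul_fwd. Qed.

Lemma coef_prod (rv b : bool) k :
  (\sum_(j < J) h`_j * (((-1) ^+ b) ^+ j *: 'X^(o rv j)))`_k =
  \sum_(j < J) ((-1) ^+ b) ^+ j * T rv j k.
Proof. by rewrite coef_sub. Qed.

Lemma sum_pm (rv : bool) k :
  \sum_(j < J) ((-1) ^+ false) ^+ j * T rv j k + \sum_(j < J) ((-1) ^+ true) ^+ j * T rv j k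
  = D false rv k *+ 2.
Proof.
rewrite /D -big_split -sumrMnl /=; apply: eq_bigr => j _.
rewrite expr0 expr1n mul1r expr1 -signr_odd; case: (odd j) => /=.
  by rewrite expr1 mulN1r subrr mul0rn.
by rewrite expr0 mul1r mulr2n.
Qed.

Lemma sum_mm (rv : bool) k :
  \sum_(j < J) ((-1) ^+ false) ^+ j * T rv j k - \sum_(j < J) ((-1) ^+ true) ^+ j * T rv j k
  = D true rv k *+ 2.
Proof.
rewrite /D -sumrB -sumrMnl /=; apply: eq_bigr => j _.
rewrite expr0 expr1n mul1r expr1 -signr_odd; case: (odd j) => /=.
  by rewrite expr1 mulN1r opprK mulr2n.
by rewrite expr0 mul1r subrr mul0rn.
Qed.

Lemma parity_gap j j0 : odd j = odd j0 -> j != j0 -> (j.+2 <= j0)%N \/ (j0.+2 <= j)%N.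
Proof. move=> h1 /eqP h2; have : (j %% 2 = j0 %% 2)%N by rewrite !modn2 h1. lia. Qed.

Lemma dec_fwd j0 t : (j0 < J)%N -> (t < 2 * N)%N ->
  D (odd j0) false (N * j0 + t) =
  (h`_j0)`_t + (if (2 <= j0)%N then (h`_(j0 - 2))`_(t + 2 * N) else 0).
Proof.
move=> hj0 ht; have hN := N_gt0.
set F := fun j => if odd j == odd j0 then T false j (N * j0 + t) else 0.
have Fj0 : F j0 = (h`_j0)`_t.
  by rewrite /F eqxx /T /= leq_addr addKn.
have F0 : forall j, (j < J)%N -> j != j0 -> (j0 < 2 \/ j != j0 - 2)%N -> F j = 0.
  move=> j hj hne hne2; rewrite /F; case: eqP => // hodd.
  rewrite /T /=; case: leqP => // hle.
  have [hlt|hgt] := parity_gap _ _ hodd hne.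
    case: hne2 => hne2.
      exfalso; lia.
    apply: hzero.
    have : (j + 4 <= j0)%N.
      move: hne2 => /eqP hne2.
      have : (j %% 2 = j0 %% 2)%N by rewrite !modn2 hodd.
      lia.
    move=> h4; nia.
  exfalso; nia.
have -> : D (odd j0) false (N * j0 + t) = \sum_(j < J) F j by [].
case: (leqP 2 j0) => h2.
  rewrite (@sum_two _ J F j0 (j0 - 2)) //; first last.
  - by move=> j hj hne hne2; apply: F0 => //; right.
  - apply/eqP; lia.
  - lia.
  rewrite Fj0; congr (_ + _).
  rewrite /F /= oddB // addbF eqxx /T /=.
  rewrite ifT; last by nia.
  congr (_`_ _); rewrite mulnBr; nia.
rewrite (@sum_one _ J F j0) // ?Fj0 ?addr0 //.
by move=> j hj hne; apply: F0 => //; left.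
Qed.

Lemma dec_rev j0 t : (j0 < J)%N -> (2 * N <= t)%N -> (t < 4 * N)%N ->
  D (odd j0) true (N * (J - 1 - j0) + t) =
  (h`_j0)`_t + (if (2 <= j0)%N then (h`_(j0 - 2))`_(t - 2 * N) else 0).
Proof.
move=> hj0 ht1 ht2; have hN := N_gt0.
set F := fun j => if odd j == odd j0 then T true j (N * (J - 1 - j0) + t) else 0.
have Fj0 : F j0 = (h`_j0)`_t.
  by rewrite /F eqxx /T /= leq_addr addKn.
have F0 : forall j, (j < J)%N -> j != j0 -> (j0 < 2 \/ j != j0 - 2)%N -> F j = 0.
  move=> j hj hne hne2; rewrite /F; case: eqP => // hodd.
  rewrite /T /=; case: leqP => // hle.
  have [hlt|hgt] := parity_gap _ _ hodd hne.
    case: hne2 => hne2.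
      exfalso; lia.
    have : (j + 4 <= j0)%N.
      move: hne2 => /eqP hne2.
      have : (j %% 2 = j0 %% 2)%N by rewrite !modn2 hodd.
      lia.
    move=> h4; exfalso.
    have : (J - 1 - j0 + 4 <= J - 1 - j)%N by lia.
    move: hle; set a := (J - 1 - j0)%N; set a' := (J - 1 - j)%N; move=> hle ha.
    nia.
  apply: hzero.
  have : (J - 1 - j + 2 <= J - 1 - j0)%N by lia.
  move: hle; set a := (J - 1 - j0)%N; set a' := (J - 1 - j)%N; move=> hle ha.
  nia.
have -> : D (odd j0) true (N * (J - 1 - j0) + t) = \sum_(j < J) F j by [].
case: (leqP 2 j0) => h2.
  rewrite (@sum_two _ J F j0 (j0 - 2)) //; first last.
  - by move=> j hj hne hne2; apply: F0 => //; right.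
  - apply/eqP; lia.
  - lia.
  rewrite Fj0; congr (_ + _).
  rewrite /F /= oddB // addbF eqxx /T /=.
  have e : (J - 1 - (j0 - 2) = J - 1 - j0 + 2)%N by lia.
  rewrite e ifT; last by nia.
  congr (_`_ _); nia.
rewrite (@sum_one _ J F j0) // ?Fj0 ?addr0 //.
by move=> j hj hne; apply: F0 => //; left.
Qed.

Lemma divn_uniq d q a : (0 < d)%N -> (a * d <= q)%N -> (q < a * d + d)%N -> (q %/ d = a)%N.
Proof.
move=> hd h1 h2.
have -> : q = (a * d + (q - a * d))%N by rewrite subnKC.
rewrite divnMDl // divn_small ?addn0 //; lia.
Qed.

Lemma sgn_even (b : bool) m : ((-1) ^+ b : R) ^+ (2 * m) = 1.
Proof. by rewrite mul2n -addnn exprD sgn_sq. Qed.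

Lemma phi_coef (b : bool) (c : nat -> {poly R}) q :
  (forall j, (Ly <= j)%N -> c j = 0) -> (forall j, (size (c j) <= Lx)%N) ->
  (phi ((-1) ^+ b) c Ly)`_q =
  (c (2 * (q %/ (2 * N)))%N)`_(q %% (2 * N)) +
  (-1) ^+ b * (if (N <= q)%N then (c (2 * ((q - N) %/ (2 * N)) + 1)%N)`_((q - N) %% (2 * N)) else 0).
Proof.
move=> hc0 hcs; have hN := N_gt0; have hL := Lx_le.
have h2N : (0 < 2 * N)%N by lia.
rewrite /phi coef_sub.
set G := fun j => ((-1) ^+ b) ^+ j * (if (N * j <= q)%N then (c j)`_(q - N * j) else 0).
have -> : \sum_(j < Ly) ((-1) ^+ b) ^+ j * (if (N * j <= q)%N then (c j)`_(q - N * j) else 0)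
   = \sum_(j < Ly) G j by [].
rewrite -(@sum_ext0 _ G Ly (Ly + q.+1)); last 2 first.
- exact: leq_addr.
- by move=> i hi _; rewrite /G hc0 // coef0 if_same mulr0.
set ke := (2 * (q %/ (2 * N)))%N.
set ko := (2 * ((q - N) %/ (2 * N)) + 1)%N.
have hdq := divn_eq q (2 * N); have hrq := ltn_pmod q h2N.
have hdq' := divn_eq (q - N) (2 * N); have hrq' := ltn_pmod (q - N) h2N.
have Gke : G ke = (c ke)`_(q %% (2 * N)).
  rewrite /G /ke sgn_even mul1r ifT; last by nia.
  congr (_`_ _); nia.
have zero : forall j, (j < Ly + q.+1)%N -> j != ke -> (N <= q -> j != ko)%N -> G j = 0.
  move=> j hj hne hne2; rewrite /G; case: leqP => hle; last by rewrite mulr0.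
  case: (leqP (2 * N) (q - N * j)) => hgap.
    by rewrite nth_default ?mulr0 //; apply: leq_trans (hcs j) _; lia.
  have hj2 := odd_double_half j.
  move: hne hne2 hj2; case: (odd j) => /= hne hne2 hj2.
    have hNq : (N <= q)%N by nia.
    have e : ko = j.
      rewrite /ko (@divn_uniq (2 * N) (q - N) j./2) //; first lia.
      - nia.
      - nia.
    by move: (hne2 hNq); rewrite e eqxx.
  have e : ke = j.
    rewrite /ke (@divn_uniq (2 * N) q j./2) //; first lia.
    - nia.
    - nia.
  by move: hne; rewrite e eqxx.
case: (leqP N q) => hNq.
  rewrite (@sum_two _ _ G ke ko); first last.
  - by move=> j hj h1 h2; apply: zero.
  - rewrite /ke /ko; move: (q %/ (2 * N))%N ((q - N) %/ (2 * N))%N => x y; apply/eqP; lia.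
  - rewrite /ko; nia.
  - rewrite /ke; nia.
  rewrite Gke; congr (_ + _).
  rewrite /G /ko exprD expr1 sgn_even mul1r ifT; last by nia.
  congr (_ * (_`_ _)); nia.
rewrite (@sum_one _ _ G ke); first by rewrite Gke mulr0 addr0.
- rewrite /ke; move: hdq; move: (q %/ (2 * N))%N (q %% (2 * N))%N => d r e; nia.
by move=> j hj h1; apply: zero => // ?; lia.
Qed.

Lemma phi_size (s : R) (c : nat -> {poly R}) :
  (forall j, (size (c j) <= Lx)%N) -> (size (phi s c Ly) <= N * (Ly - 1) + Lx)%N.
Proof.
move=> hc; apply: size_sub => // j hj; apply: leq_mul => //; lia.
Qed.

End Math.

Lemma divmod_uniq d a r : (r < d)%N -> ((a * d + r) %/ d = a)%N /\ ((a * d + r) %% d = r)%N.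
Proof.
move=> hr; have hd : (0 < d)%N by lia.
by rewrite divnMDl // divn_small ?addn0 // modnMDl modn_small.
Qed.

Section Sem.
Variable R : comNzRingType.
Variable hv : R -> R.
Hypothesis hhv : forall r : R, hv (r *+ 2) = r.
Variables Lx Ly : nat.
Hypothesis hLx : (1 <= Lx)%N.
Hypothesis hLy : (1 <= Ly)%N.
Variables f g : {poly {poly R}}.
Hypothesis hf : (size f <= Ly)%N.
Hypothesis hfc : forall j, leq (size f`_j) Lx.
Hypothesis hg : (size g <= Ly)%N.
Hypothesis hgc : forall j, leq (size g`_j) Lx.

Let N := pN Lx.
Let M := pM Lx Ly.
Let M2 := pM2 Lx Ly.
Let J := pJ Ly.
Let h := f * g.

Lemma N_pos : (0 < N)%N. Proof. rewrite /N /pN; lia. Qed.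
Lemma NLx : (Lx <= 2 * N)%N /\ (N <= Lx)%N. Proof. rewrite /N /pN; lia. Qed.

Definition cfun (w rv : bool) : nat -> {poly R} :=
  let W := if w then g else f in
  if rv then @cr R Ly (fun j => W`_j) else (fun j => W`_j).

Lemma cfun0 w rv j : (Ly <= j)%N -> cfun w rv j = 0.
Proof.
move=> hj; rewrite /cfun; case: rv.
  by rewrite /cr ltnNge hj.
by case: w; apply: nth_default; [exact: leq_trans hg hj | exact: leq_trans hf hj].
Qed.

Lemma cfun_size w rv j : (size (cfun w rv j) <= Lx)%N.
Proof.
rewrite /cfun; case: rv; last by case: w.
by rewrite /cr; case: ifP => _; [case: w | rewrite size_poly0].
Qed.

Let R0 := encode Lx Ly f ++ encode Lx Ly g.
Let R1 := rcons R0 0.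

Lemma size_R0 : size R0 = Z Lx Ly.
Proof. by rewrite /R0 size_cat !size_map size_iota /Z /LL; lia. Qed.

Lemma nth_encode (p : {poly {poly R}}) jj i : (jj < Ly)%N -> (i < Lx)%N ->
  nth 0 (encode Lx Ly p) (jj * Lx + i)%N = (p`_jj)`_i.
Proof.
move=> hj hi; rewrite /encode (nth_map 0%N); last by rewrite size_iota; nia.
rewrite nth_iota; last by nia.
by have [-> ->] := divmod_uniq Lx jj i hi.
Qed.

Lemma nth_R1 w rv k i : nth 0 R1 (reg1 Lx Ly w rv k i) = (cfun w rv k)`_i.
Proof.
rewrite /reg1; case: ifP => [/andP[hk hi]|hn].
  rewrite /R1 nth_rcons size_R0.
  have hjj : ((if rv then Ly - 1 - k else k) < Ly)%N by case: rv; lia.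
  have hlt : (w * LL Lx Ly + (if rv then Ly - 1 - k else k) * Lx + i < Z Lx Ly)%N.
    by rewrite /Z /LL; case: w; nia.
  rewrite hlt /R0 nth_cat !size_map size_iota.
  case: w hlt => /= hlt.
    rewrite ifF; last by rewrite /LL; lia.
    have -> : (1 * LL Lx Ly + (if rv then Ly - 1 - k else k) * Lx + i - Lx * Ly =
      (if rv then Ly - 1 - k else k) * Lx + i)%N by rewrite /LL; lia.
    rewrite nth_encode // /cfun; clear hjj hlt; case: rv => //; by rewrite /cr hk.
  rewrite ifT; last by rewrite /LL in hlt *; nia.
  rewrite add0n nth_encode // /cfun; clear hjj hlt; case: rv => //; by rewrite /cr hk.
rewrite /R1 nth_rcons size_R0 ltnn eqxx.
move/negbT: hn; rewrite negb_and -!leqNgt => /orP[hk|hi].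
  by rewrite cfun0 // coef0.
by rewrite nth_default //; apply: leq_trans (cfun_size _ _ _) hi.
Qed.

Lemma size_R1 : size R1 = (Z Lx Ly).+1.
Proof. by rewrite /R1 size_rcons size_R0. Qed.

Lemma reg1_lt w rv k i : (reg1 Lx Ly w rv k i < size R1)%N.
Proof.
rewrite size_R1 /reg1; case: ifP => // /andP[hk hi].
have hjj : ((if rv then Ly - 1 - k else k) < Ly)%N by case: rv; lia.
move: hjj; set jj := (if rv then _ else _) => hjj.
rewrite /Z /LL; case: w => /=; nia.
Qed.

Lemma nth_R1_Z : nth 0 R1 (Z Lx Ly) = 0.
Proof. by rewrite /R1 nth_rcons size_R0 ltnn eqxx. Qed.

Definition v1 (p : nat) : R :=
  let bb := (p %/ M)%N in let q := (p %% M)%N in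
  let mm := bb./2 in let w := odd bb in let rv := (2 <= mm)%N in let sg := odd mm in
  (cfun w rv (2 * (q %/ (2 * N)))%N)`_(q %% (2 * N)) +
  (-1) ^+ sg * (if (N <= q)%N then (cfun w rv (2 * ((q - N) %/ (2 * N)) + 1)%N)`_((q - N) %% (2 * N)) else 0).

Lemma phase1 : exec hv (mkseq (ins1 Lx Ly) (8 * M)) R1 = R1 ++ mkseq v1 (8 * M).
Proof.
apply: exec_block => p hp.
rewrite /ins1 /v1 -/N -/M.
set bb := (p %/ M)%N; set q := (p %% M)%N.
set A := reg1 _ _ _ _ _ _.
set B := if (N <= q)%N then _ else _.
have hA : (A < size R1)%N by apply: reg1_lt.
have hB : (B < size R1)%N by rewrite /B; case: ifP => _; [apply: reg1_lt | rewrite size_R1].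
have eA : nth 0 (R1 ++ mkseq v1 (8 * M)) A = (cfun (odd bb) (2 <= bb./2)%N (2 * (q %/ (2 * N)))%N)`_(q %% (2 * N)).
  by rewrite nth_cat hA nth_R1.
have eB : nth 0 (R1 ++ mkseq v1 (8 * M)) B = (if (N <= q)%N then (cfun (odd bb) (2 <= bb./2)%N (2 * ((q - N) %/ (2 * N)) + 1)%N)`_((q - N) %% (2 * N)) else 0).
  rewrite nth_cat hB /B; case: ifP => _; by rewrite ?nth_R1 ?nth_R1_Z.
move: hA hB eA eB; move: (size R1) => n hA hB eA eB.
case: (odd bb./2) => /=.
  split; first by apply/andP; split; apply: leq_trans (leq_addr _ _).
  by rewrite eA eB expr1 mulN1r.
split; first by apply/andP; split; apply: leq_trans (leq_addr _ _).
by rewrite eA eB expr0 mul1r.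
Qed.

Lemma mkseq_ext_in (T : Type) (F G : nat -> T) n :
  (forall i, (i < n)%N -> F i = G i) -> mkseq F n = mkseq G n.
Proof.
move=> H; apply/eq_in_map => i; rewrite mem_iota => /andP[_ hi]; apply: H; lia.
Qed.

Lemma map_mkseq' (T U : Type) (F : T -> U) (G : nat -> T) n :
  map F (mkseq G n) = mkseq (fun i => F (G i)) n.
Proof. by rewrite /mkseq -map_comp. Qed.

Lemma conv_poly (U W : {poly R}) L : (size U <= L)%N -> (size W <= L)%N ->
  conv (mkseq (fun q => U`_q) L) (mkseq (fun q => W`_q) L) =
  mkseq (fun k => (U * W)`_k) (2 * L - 1).
Proof.
move=> hU hW; rewrite /conv !size_mkseq.
have -> : (L + L).-1 = (2 * L - 1)%N by lia.
apply: eq_mkseq => k.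
rewrite (coefM2 _ _ _ _ _ hU hW); apply: eq_bigr => a _.
rewrite big_mkcond; apply: eq_bigr => b _.
by rewrite !nth_mkseq.
Qed.

Definition sgn (b : bool) : R := (-1) ^+ b.

Definition PPm (mm : nat) : {poly R} :=
  @phi R Lx (sgn (odd mm)) (cfun false (2 <= mm)%N) Ly *
  @phi R Lx (sgn (odd mm)) (cfun true (2 <= mm)%N) Ly.

Definition cm (mm : nat) : seq R := mkseq (fun k => (PPm mm)`_k) M2.

Let R2 := R1 ++ mkseq v1 (8 * M).

Lemma block_v1 mm (w : bool) : (mm < 4)%N ->
  mkseq (fun q => v1 ((2 * mm + w) * M + q)%N) M =
  mkseq (fun q => (@phi R Lx (sgn (odd mm)) (cfun w (2 <= mm)%N) Ly)`_q) M.
Proof.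
move=> hmm; apply: mkseq_ext_in => q hq.
rewrite /v1; have [-> ->] := divmod_uniq _ (2 * mm + w)%N _ hq.
have -> : (2 * mm + w)./2 = mm by case: w; lia.
have -> : odd (2 * mm + w) = w by rewrite oddD oddM andFb; case: w.
rewrite (@phi_coef R Lx Ly hLx hLy f g hf hg).
- by [].
- exact: cfun0.
- exact: cfun_size.
Qed.

Lemma map_xs mm (w : bool) : (mm < 4)%N ->
  map (nth 0 R2) (mkseq (fun q => base1 Lx Ly + (2 * mm + w) * pM Lx Ly + q)%N (pM Lx Ly)) =
  mkseq (fun q => (@phi R Lx (sgn (odd mm)) (cfun w (2 <= mm)%N) Ly)`_q) M.
Proof.
move=> hmm; rewrite map_mkseq' -block_v1 //; apply: mkseq_ext_in => q hq.
rewrite /R2 nth_cat size_R1 /base1 ifF; last by lia.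
have -> : (Z Lx Ly + 1 + (2 * mm + w) * pM Lx Ly + q - (Z Lx Ly).+1 = (2 * mm + w) * M + q)%N.
  by rewrite /M; lia.
rewrite nth_mkseq //; rewrite /M; case: w; nia.
Qed.

Lemma size_R2 : size R2 = (base1 Lx Ly + 8 * M)%N.
Proof. by rewrite /R2 size_cat size_R1 size_mkseq /base1 addn1. Qed.

Lemma step_m mm t : (mm < 4)%N ->
  step hv (R2 ++ t) (mulins Lx Ly mm) = R2 ++ t ++ cm mm.
Proof.
move=> hmm; rewrite /mulins step_mul; last first.
  rewrite all_cat; apply/andP; split; rewrite /mkseq all_map; apply/allP => q;
    rewrite mem_iota => /andP[_ hq] /=; rewrite size_R2 /M; nia.
congr (_ ++ _ ++ _).
have e1 := map_xs mm false hmm; rewrite addn0 in e1.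
have e2 := map_xs mm true hmm.
rewrite e1 e2 conv_poly; first by [].
- by apply: (@phi_size R Lx Ly hLx hLy f g hf hg); apply: cfun_size.
- by apply: (@phi_size R Lx Ly hLx hLy f g hf hg); apply: cfun_size.
Qed.

Let R3 := R2 ++ (cm 0 ++ cm 1 ++ cm 2 ++ cm 3).

Lemma phase_mul : exec hv [:: mulins Lx Ly 0; mulins Lx Ly 1; mulins Lx Ly 2; mulins Lx Ly 3] R2 = R3.
Proof.
have e0 : step hv R2 (mulins Lx Ly 0) = R2 ++ cm 0.
  by rewrite -[R2 in LHS]cats0 step_m.
have e1 : step hv (R2 ++ cm 0) (mulins Lx Ly 1) = R2 ++ (cm 0 ++ cm 1).
  by rewrite step_m.
have e2 : step hv (R2 ++ (cm 0 ++ cm 1)) (mulins Lx Ly 2) = R2 ++ (cm 0 ++ cm 1 ++ cm 2).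
  by rewrite step_m // -catA.
have e3 : step hv (R2 ++ (cm 0 ++ cm 1 ++ cm 2)) (mulins Lx Ly 3) = R3.
  by rewrite step_m // /R3 -!catA.
change (step hv (step hv (step hv (step hv R2 (mulins Lx Ly 0)) (mulins Lx Ly 1))
  (mulins Lx Ly 2)) (mulins Lx Ly 3) = R3).
by rewrite e0 e1 e2 e3.
Qed.

Lemma size_cm mm : size (cm mm) = M2.
Proof. by rewrite size_mkseq. Qed.

Lemma nth_R3 mm k : (mm < 4)%N -> (k < M2)%N ->
  nth 0 R3 (base2 Lx Ly + mm * M2 + k) = (PPm mm)`_k.
Proof.
move=> hmm hk.
rewrite /R3 nth_cat size_R2 /base2 -/M ifF; last by lia.
have -> : (base1 Lx Ly + 8 * M + mm * M2 + k - (base1 Lx Ly + 8 * M) = mm * M2 + k)%N by lia.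
rewrite !nth_cat !size_cm.
case: mm hmm => [|[|[|[|mm]]]] hmm //=.
- by rewrite ifT ?nth_mkseq //; lia.
- rewrite ifF; last by lia. rewrite ifT; last by lia.
  have -> : (1 * M2 + k - M2 = k)%N by lia.
  by rewrite nth_mkseq.
- rewrite ifF; last by lia. rewrite ifF; last by lia. rewrite ifT; last by lia.
  have -> : (2 * M2 + k - M2 - M2 = k)%N by lia.
  by rewrite nth_mkseq.
- rewrite ifF; last by lia. rewrite ifF; last by lia. rewrite ifF; last by lia.
  have -> : (3 * M2 + k - M2 - M2 - M2 = k)%N by lia.
  by rewrite nth_mkseq.
Qed.

Lemma PPm_coef mm k :
  (PPm mm)`_k = \sum_(j < (2 * Ly - 1)%N) (sgn (odd mm)) ^+ j * @T R Lx Ly f g (2 <= mm)%N j k.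
Proof.
rewrite /PPm /sgn; move: (2 <= mm)%N => rv.
rewrite -(@coef_prod R Lx Ly f g rv (odd mm) k) -(@mul_o R Lx Ly hLx hLy f g hf hg rv (odd mm)).
by case: rv.
Qed.

Lemma size_R3 : size R3 = base3 Lx Ly.
Proof.
rewrite /R3 size_cat size_R2 !size_cat !size_cm /base3 /base2 -/M -/M2; lia.
Qed.

Definition v3 (p : nat) : R :=
  let cc := (p %/ M2)%N in let k := (p %% M2)%N in @D R Lx Ly f g (odd cc) (2 <= cc)%N k *+ 2.
Definition v4 (p : nat) : R :=
  let cc := (p %/ M2)%N in let k := (p %% M2)%N in @D R Lx Ly f g (odd cc) (2 <= cc)%N k.

Lemma M2_pos : (0 < M2)%N.
Proof. rewrite /M2 /pM2 /pM; lia. Qed.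

Lemma phase3 : exec hv (mkseq (ins3 Lx Ly) (4 * M2)) R3 = R3 ++ mkseq v3 (4 * M2).
Proof.
apply: exec_block => p hp.
have hM2 := M2_pos.
have hk : (p %% M2 < M2)%N by apply: ltn_pmod.
have hcc : (p %/ M2 < 4)%N by rewrite ltn_divLR.
rewrite /ins3 /v3 -/M2.
move: hk hcc; set cc := (p %/ M2)%N; set k := (p %% M2)%N => hk hcc.
set mp := (if (2 <= cc)%N then 2 else 0)%N.
have hmp : (mp.+1 < 4)%N by rewrite /mp; case: ifP.
have hA : (base2 Lx Ly + mp * M2 + k < size R3)%N by rewrite size_R3 /base3 -/M2; nia.
have hB : (base2 Lx Ly + mp.+1 * M2 + k < size R3)%N by rewrite size_R3 /base3 -/M2; nia.
have eA : nth 0 (R3 ++ mkseq v3 (4 * M2)) (base2 Lx Ly + mp * M2 + k) =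
   \sum_(j < (2 * Ly - 1)%N) ((-1) ^+ false) ^+ j * @T R Lx Ly f g (2 <= cc)%N j k.
  rewrite nth_cat hA nth_R3 //; last by lia.
  rewrite PPm_coef /sgn /mp; by case: ifP.
have eB : nth 0 (R3 ++ mkseq v3 (4 * M2)) (base2 Lx Ly + mp.+1 * M2 + k) =
   \sum_(j < (2 * Ly - 1)%N) ((-1) ^+ true) ^+ j * @T R Lx Ly f g (2 <= cc)%N j k.
  rewrite nth_cat hB nth_R3 //.
  rewrite PPm_coef /sgn /mp; by case: ifP.
move: hA hB eA eB; move: (size R3) => n hA hB eA eB.
case: (odd cc) => /=.
  split; first by apply/andP; split; apply: leq_trans (leq_addr _ _).
  by rewrite eA eB sum_mm.
split; first by apply/andP; split; apply: leq_trans (leq_addr _ _).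
by rewrite eA eB sum_pm.
Qed.

Let R4 := R3 ++ mkseq v3 (4 * M2).

Lemma size_R4 : size R4 = base4 Lx Ly.
Proof. by rewrite /R4 size_cat size_R3 size_mkseq /base4. Qed.

Lemma phase4 : exec hv (mkseq (ins4 Lx Ly) (4 * M2)) R4 = R4 ++ mkseq v4 (4 * M2).
Proof.
apply: exec_block => p hp; rewrite /ins4 /=.
have hi : (base3 Lx Ly + p < size R4)%N by rewrite size_R4 /base4 -/M2; lia.
split; first by apply: leq_trans hi (leq_addr _ _).
rewrite nth_cat hi /R4 nth_cat size_R3 ifF; last by lia.
by rewrite addKn nth_mkseq // /v3 hhv.
Qed.

Let R5 := R4 ++ mkseq v4 (4 * M2).

Lemma size_R5 : size R5 = base5 Lx Ly.
Proof. by rewrite /R5 size_cat size_R4 size_mkseq /base5. Qed.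

Lemma Z_lt_base4 : (Z Lx Ly < base4 Lx Ly)%N.
Proof. rewrite /base4 /base3 /base2 /base1; lia. Qed.

Lemma nth_R5_Z : nth 0 R5 (Z Lx Ly) = 0.
Proof.
have h1 : (Z Lx Ly < size R1)%N by rewrite size_R1.
rewrite /R5 nth_cat size_R4 ifT; last by have := Z_lt_base4; lia.
rewrite /R4 nth_cat size_R3 ifT; last by rewrite /base3 /base2 /base1; lia.
rewrite /R3 nth_cat size_R2 ifT; last by rewrite size_R1 in h1; rewrite /base1; lia.
by rewrite /R2 nth_cat h1 nth_R1_Z.
Qed.

Lemma nth_R5_v4 cc k : (cc < 4)%N -> (k < M2)%N ->
  nth 0 R5 (base4 Lx Ly + cc * M2 + k) = @D R Lx Ly f g (odd cc) (2 <= cc)%N k.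
Proof.
move=> hcc hk.
rewrite /R5 nth_cat size_R4 ifF; last by lia.
rewrite nth_mkseq; last by nia.
rewrite /v4 -/M2.
have -> : (base4 Lx Ly + cc * M2 + k - base4 Lx Ly = cc * M2 + k)%N by lia.
by have [-> ->] := divmod_uniq _ cc _ hk.
Qed.

Definition v5 (m : nat) : R := (h`_(m %/ (4 * N)))`_(m %% (4 * N)).

Lemma hz j t : (2 * Lx - 1 <= t)%N -> (h`_j)`_t = 0.
Proof.
move=> ht; apply: nth_default; apply: leq_trans ht.
exact: (@hsize R Lx Ly hLx hLy f g hf hfc hg hgc j).
Qed.

Lemma phase5 : exec hv (mkseq (ins5 Lx Ly) (J * (4 * N))) R5 = R5 ++ mkseq v5 (J * (4 * N)).
Proof.
apply: exec_block => m hm.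
have hN := N_pos; have [hL1 hL2] := NLx.
have h4N : (0 < 4 * N)%N by lia.
have ht : (m %% (4 * N) < 4 * N)%N by apply: ltn_pmod.
have hj : (m %/ (4 * N) < J)%N by rewrite ltn_divLR.
have hmeq := divn_eq m (4 * N).
rewrite /ins5 /v5 -/N -/M2 -/J.
move: ht hj hmeq; set j := (m %/ (4 * N))%N; set t := (m %% (4 * N))%N => ht hj hmeq.
have hJ : (J = 2 * Ly - 1)%N by [].
have hM2 : (M2 = 2 * (N * (Ly - 1) + Lx) - 1)%N by [].
set R6 := R5 ++ mkseq v5 (J * (4 * N)).
have fin : forall (A B : nat) (P : R), (A < size R5)%N -> (B < size R5 + m)%N ->
    nth 0 R6 A = (h`_j)`_t + P -> nth 0 R6 B = P ->
    refs_ok (ISub A B) (size R5 + m) /\ @ev1 R hv R6 (ISub A B) = (h`_j)`_t.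
  move=> A B P hA hB eA eB; split.
    by rewrite /= hB andbT; apply: leq_trans hA (leq_addr _ _).
  by rewrite /= eA eB addrK.
have nthZ : nth 0 R6 (Z Lx Ly) = 0.
  rewrite /R6 nth_cat size_R5 ifT; first exact: nth_R5_Z.
  have := Z_lt_base4; rewrite /base5; lia.
have ZltR5 : (Z Lx Ly < size R5)%N by rewrite size_R5 /base5; have := Z_lt_base4; lia.
have nthP : forall t', (t' < 4 * N)%N -> (2 <= j)%N ->
    nth 0 R6 (base5 Lx Ly + (j - 2) * (4 * N) + t') = (h`_(j - 2))`_t'.
  move=> t' ht' hj2.
  have hX : ((j - 2) * (4 * N) + t' < J * (4 * N))%N by nia.
  move: hX; set X := ((j - 2) * (4 * N))%N => hX.
  rewrite /R6 nth_cat size_R5 ifF; last by rewrite ltnNge -addnA leq_addr.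
  rewrite nth_mkseq; last by lia.
  rewrite /v5 -/N.
  have -> : (base5 Lx Ly + X + t' - base5 Lx Ly = X + t')%N by lia.
  by rewrite /X; have [-> ->] := divmod_uniq _ (j - 2) _ ht'.
have PltR : forall t', (t' < 4 * N)%N -> (2 <= j)%N ->
    (base5 Lx Ly + (j - 2) * (4 * N) + t' < size R5 + m)%N.
  move=> t' ht' hj2; rewrite size_R5; nia.
have nthD : forall cc k, (cc < 4)%N -> (k < M2)%N ->
    nth 0 R6 (base4 Lx Ly + cc * M2 + k) = @D R Lx Ly f g (odd cc) (2 <= cc)%N k.
  move=> cc k hcc hk; rewrite /R6 nth_cat size_R5 ifT; first exact: nth_R5_v4.
  rewrite /base5; nia.
have DltR : forall cc k, (cc < 4)%N -> (k < M2)%N -> (base4 Lx Ly + cc * M2 + k < size R5)%N.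
  move=> cc k hcc hk; rewrite size_R5 /base5; nia.
case: ifP => hlow.
  apply: (fin _ _ (if (2 <= j)%N then (h`_(j - 2))`_(t + 2 * N) else 0)).
  - case: ifP => hd //; apply: DltR => //; case: (odd j); lia.
  - case: ifP => hj2; last by apply: leq_trans ZltR5 (leq_addr _ _).
    apply: PltR => //; lia.
  - case: ifP => hd.
      rewrite nthD //; last by case: (odd j).
      rewrite oddb /=.
      have -> : (2 <= odd j)%N = false by case: (odd j).
      exact: (@dec_fwd R Lx Ly hLx hLy f g hf hfc hg hgc j t hj hlow).
    rewrite nthZ hz; last by nia.
    case: ifP => hj2; last by rewrite addr0.
    rewrite hz ?addr0 //; nia.
  - case: ifP => hj2; last exact: nthZ.
    apply: nthP => //; lia.
have hhigh : (2 * N <= t)%N by move/negbT: hlow; rewrite -leqNgt.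
apply: (fin _ _ (if (2 <= j)%N then (h`_(j - 2))`_(t - 2 * N) else 0)).
- case: ifP => hd //; apply: DltR => //; case: (odd j); lia.
- case: ifP => hj2; last by apply: leq_trans ZltR5 (leq_addr _ _).
  apply: PltR => //; lia.
- case: ifP => hd.
    rewrite nthD //; last by case: (odd j).
    have -> : odd (2 + odd j) = odd j by case: (odd j).
    have -> : (2 <= 2 + odd j)%N = true by case: (odd j).
    exact: (@dec_rev R Lx Ly hLx hLy f g hf hfc hg hgc j t hj hhigh ht).
  rewrite nthZ hz; last first.
    move/negbT: hd; rewrite -leqNgt => hd.
    have : (N * (J - 1 - j) <= N * (2 * Ly - 2))%N by apply: leq_mul => //; lia.
    nia.
  case: ifP => hj2; last by rewrite addr0.
  rewrite hz ?addr0 //.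
  move/negbT: hd; rewrite -leqNgt => hd.
  have e1 : (J - 1 - j + 2 <= 2 * Ly - 2)%N by lia.
  have := leq_mul (leqnn N) e1; rewrite mulnDr => e2.
  have e3 : (N * (2 * Ly - 2) = 2 * (N * (Ly - 1)))%N.
    have -> : (2 * Ly - 2 = 2 * (Ly - 1))%N by lia.
    by rewrite mulnCA.
  move: hd e2 e3; rewrite hM2; set a := (N * (J - 1 - j))%N; set b := (N * (Ly - 1))%N.
  set c := (N * (2 * Ly - 2))%N; lia.
- case: ifP => hj2; last exact: nthZ.
  apply: nthP => //; lia.
Qed.

Lemma exec_all : exec hv (theprog Lx Ly) R0 = R5 ++ mkseq v5 (J * (4 * N)).
Proof.
rewrite /theprog.
change (exec hv (mkseq (ins1 Lx Ly) (8 * M) ++ [:: mulins Lx Ly 0; mulins Lx Ly 1; mulins Lx Ly 2; mulins Lx Ly 3] ++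
  mkseq (ins3 Lx Ly) (4 * M2) ++ mkseq (ins4 Lx Ly) (4 * M2) ++ mkseq (ins5 Lx Ly) (J * (4 * N)))
  (step hv R0 (ISub 0 0)) = R5 ++ mkseq v5 (J * (4 * N))).
have -> : step hv R0 (ISub 0 0) = R1 by rewrite /= subrr.
rewrite exec_cat phase1 -/R2 exec_cat phase_mul exec_cat phase3 -/R4 exec_cat phase4 -/R5.
exact: phase5.
Qed.

Lemma correct : run hv (theprog Lx Ly) R0 (theout Lx Ly) = encode (2 * Lx - 1) (2 * Ly - 1) h.
Proof.
rewrite /run exec_all /theout map_mkseq' /encode.
apply: mkseq_ext_in => k hk.
have hN := N_pos; have [hL1 hL2] := NLx.
have hX : (0 < 2 * Lx - 1)%N by lia.
have hi : (k %% (2 * Lx - 1) < 2 * Lx - 1)%N by apply: ltn_pmod.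
have hjj : (k %/ (2 * Lx - 1) < 2 * Ly - 1)%N by rewrite ltn_divLR // mulnC.
move: hi hjj; set i := (k %% (2 * Lx - 1))%N; set jj := (k %/ (2 * Lx - 1))%N => hi hjj.
have hi4 : (i < 4 * N)%N by lia.
have hY : (jj * (4 * N) + i < J * (4 * N))%N by rewrite /J /pJ; nia.
move: hY; set Y := (jj * (4 * N))%N => hY.
rewrite -/(pN Lx) -/N nth_cat size_R5 ifF; last by rewrite ltnNge -addnA leq_addr.
have -> : (base5 Lx Ly + Y + i - base5 Lx Ly = Y + i)%N by lia.
rewrite nth_mkseq // /v5 /Y.
by have [-> ->] := divmod_uniq _ jj _ hi4.
Qed.

End Sem.

Lemma size_part (R : comNzRingType) (Lx Ly : nat) (f : {poly {poly R}}) (b : bool) :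
  (1 <= Lx)%N -> (1 <= Ly)%N -> (size f <= Ly)%N -> (forall j, leq (size f`_j) Lx) ->
  (size (f.[(-1) ^+ b *: 'X^(uphalf Lx)]) <= uphalf Lx * (Ly - 1) + Lx)%N /\ (size (revsubst (uphalf Lx) Ly b f) <= uphalf Lx * (Ly - 1) + Lx)%N.
Proof.
move=> hLx hLy hf hfc; split.
  rewrite horner_coef.
  have -> : \sum_(i < size f) f`_i * ((-1) ^+ b *: 'X^(uphalf Lx)) ^+ i =
     \sum_(i < size f) (fun j => f`_j) i * (((-1) ^+ b) ^+ i *: 'X^(uphalf Lx * i)).
    by apply: eq_bigr => i _; rewrite exprZn exprM.
  apply: size_sub => // j hj; apply: leq_mul => //; lia.
rewrite /revsubst.
apply: (@size_sub _ (fun j => f`_j) (fun j => ((-1) ^+ b) ^+ j) (fun j => uphalf Lx * (Ly - 1 - j))%N).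
- move=> j hj; apply: leq_mul => //; lia.
- by [].
Qed.

Theorem proposition2p4 :
  exists C : nat,
  forall Lx Ly : nat, (1 <= Lx)%N -> (1 <= Ly)%N ->
  let N := uphalf Lx in
  let M := (N * (Ly - 1) + Lx)%N in
  (* the Kronecker substitutions lie in R[x] and have length M *)
  (forall (R : comNzRingType) (f : {poly {poly R}}),
     (size f <= Ly)%N -> (forall j, leq (size f`_j) Lx) ->
     forall b : bool,
       (size (f.[(-1) ^+ b *: 'X^N]) <= M)%N /\
       (size (revsubst N Ly b f) <= M)%N) /\
  (* the reduction: a uniform straight-line program using 4 multiplications
     of length-M polynomials, O(Lx Ly) additions/subtractions and
     O(Lx Ly) divisions by 2, computes all coefficients of h = f g *)
  exists (P : prog) (out : seq nat),
    [/\ mul_ok M P, (n_mul P <= 4)%N,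
        (n_addsub P <= C * Lx * Ly)%N, (n_half P <= C * Lx * Ly)%N &
    forall R : comNzRingType,
      injective (fun r : R => r *+ 2) ->
      forall hv : R -> R, (forall r : R, hv (r *+ 2) = r) ->
      forall f g : {poly {poly R}},
        (size f <= Ly)%N -> (forall j, leq (size f`_j) Lx) ->
        (size g <= Ly)%N -> (forall j, leq (size g`_j) Lx) ->
        run hv P (encode Lx Ly f ++ encode Lx Ly g) out
        = encode (2 * Lx - 1) (2 * Ly - 1) (f * g)].
Proof.
exists 64%N => Lx Ly hLx hLy N M; split.
  by move=> R f hf hfc b; apply: size_part.
exists (theprog Lx Ly), (theout Lx Ly); split.
- exact: mul_ok_prog.
- by rewrite n_mul_prog.
- rewrite n_addsub_prog /pM2 /pM /pJ.
  have h1 : (pN Lx <= Lx)%N by rewrite /pN; lia.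
  move: h1; set n := pN Lx => h1.
  have h2 : (n * (Ly - 1) <= Lx * Ly)%N by apply: leq_mul => //; lia.
  have h3 : ((2 * Ly - 1) * (4 * n) <= 8 * (Lx * Ly))%N.
    have : ((2 * Ly - 1) * (4 * n) <= (2 * Ly) * (4 * Lx))%N by apply: leq_mul; lia.
    rewrite mulnACA (mulnC Ly Lx); lia.
  have h4 : (Lx <= Lx * Ly)%N by apply: leq_pmulr.
  have h5 : (64 * Lx * Ly = 64 * (Lx * Ly))%N by rewrite mulnA.
  rewrite h5; move: h2 h3 h4; set a := (n * (Ly - 1))%N; set c := ((2 * Ly - 1) * (4 * n))%N;
    set d := (Lx * Ly)%N; lia.
- rewrite n_half_prog /pM2 /pM.
  have h1 : (pN Lx <= Lx)%N by rewrite /pN; lia.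
  move: h1; set n := pN Lx => h1.
  have h2 : (n * (Ly - 1) <= Lx * Ly)%N by apply: leq_mul => //; lia.
  have h4 : (Lx <= Lx * Ly)%N by apply: leq_pmulr.
  have h5 : (64 * Lx * Ly = 64 * (Lx * Ly))%N by rewrite mulnA.
  rewrite h5; move: h2 h4; set a := (n * (Ly - 1))%N; set d := (Lx * Ly)%N; lia.
move=> R _ hv hhv f g hf hfc hg hgc.
exact: (@correct R hv hhv Lx Ly hLx hLy f g hf hfc hg hgc).
Qed.
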